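(* Let $M$ be a matroid of rank $k$ on $[n]$ with exactly two connected components, i.e. $M=M_1\oplus M_2$ where $M_1$ has ground set $S$ and $M_2$ has ground set $T=[n]\setminus S$. Suppose $\{S,T\}$ is not a noncrossing partition of $[n]$, i.e. there exist $a<b<c<d$ in cyclic order on $[n]$ with $a,c\in S$ and $b,d\in T$. Then $\Gamma_M$ has a two-dimensional face which is not a positroid polytope; specifically, a square face with vertices $e_{R\cup\{a,b\}}, e_{R\cup\{a,d\}}, e_{R\cup\{b,c\}}, e_{R\cup\{c,d\}}$ for some such $a,b,c,d$ and some $R\subseteq[n]$ of size $k-2$ disjoint from $\{a,b,c,d\}$.
   Context: For $I\subseteq[n]$, $e_I=\sum_{i\in I}e_i\in\mathbb{R}^n$. The matroid polytope of a matroid $M$ on $[n]$ with bases $\mathcal{B}$ is $\Gamma_M=\mathrm{conv}\{e_B:B\in\mathcal{B}\}$. A positroid of rank $k$ on $[n]$ is a matroid whose bases are the $I\in\binom{[n]}{k}$ with $p_I(A)\ne0$ for some real $k\times n$ matrix $A$ of rank $k$ with all maximal minors $p_I(A)\ge 0$; a positroid polytope is the matroid polytope of a positroid. A matroid is connected if it is not a direct sum of two matroids on nonempty ground sets; the connected components are the ground sets of the summands in the decomposition into connected matroids. *)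

(* Defs.v *)
From HB Require Import structures.
From mathcomp Require Import all_boot all_order all_algebra.
Set Implicit Arguments. Unset Strict Implicit. Unset Printing Implicit Defensive.
Import Order.TTheory GRing.Theory Num.Theory.

Definition is_matroid (n : nat) (E : {set 'I_n}) (Bs : {set {set 'I_n}}) : Prop :=
  Bs != set0 /\
  (forall B, B \in Bs -> B \subset E) /\
  (forall B1 B2, B1 \in Bs -> B2 \in Bs -> forall x, x \in B1 :\: B2 ->
     exists2 y, y \in B2 :\: B1 & (y |: (B1 :\ x)) \in Bs).

Definition direct_sum (n : nat) (Bs1 Bs2 : {set {set 'I_n}}) : {set {set 'I_n}} :=
  [set B1 :|: B2 | B1 in Bs1, B2 in Bs2].

Definition connected_matroid (n : nat) (E : {set 'I_n}) (Bs : {set {set 'I_n}}) : Prop :=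
  is_matroid E Bs /\
  ~ (exists E1 E2 Bs1 Bs2,
       [/\ E1 != set0, E2 != set0, [disjoint E1 & E2], E1 :|: E2 = E &
       [/\ is_matroid E1 Bs1, is_matroid E2 Bs2 & Bs = direct_sum Bs1 Bs2]]).

Definition cyclic_order (n : nat) (a b c d : 'I_n) : bool :=
  [|| [&& a < b, b < c & c < d], [&& b < c, c < d & d < a],
      [&& c < d, d < a & a < b] | [&& d < a, a < b & b < c]]%N.

Local Open Scope ring_scope.

Definition evec (R : realFieldType) (n : nat) (I : {set 'I_n}) : 'rV[R]_n :=
  \row_i (i \in I)%:R.

Definition in_conv (R : realFieldType) (n : nat) (Bs : {set {set 'I_n}}) (x : 'rV[R]_n) : Prop :=
  exists l : {ffun {set 'I_n} -> R},
    [/\ forall B, 0 <= l B, \sum_(B in Bs) l B = 1 &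
        x = \sum_(B in Bs) l B *: evec R B].

Definition matroid_polytope (R : realFieldType) (n : nat) (Bs : {set {set 'I_n}}) :
  'rV[R]_n -> Prop := in_conv Bs.

Definition dotv (R : realFieldType) (n : nat) (w x : 'rV[R]_n) : R :=
  \sum_i w 0 i * x 0 i.

Definition is_face (R : realFieldType) (n : nat) (P F : 'rV[R]_n -> Prop) : Prop :=
  exists w : 'rV[R]_n, forall x,
    F x <-> (P x /\ forall y, P y -> dotv w y <= dotv w x).

(* maximal minor p_I(A): columns of A indexed by I, in increasing order *)
Definition pminor (R : realFieldType) (k n : nat) (A : 'M[R]_(k, n)) (I : {set 'I_n}) : R :=
  \det (\matrix_(i < k, j < k) oapp (A i) 0 (nth None (map Some (enum I)) j)).

Definition is_positroid (R : realFieldType) (n k : nat) (Bs : {set {set 'I_n}}) : Prop :=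
  exists A : 'M[R]_(k, n),
    [/\ \rank A = k,
        forall I : {set 'I_n}, #|I| = k -> 0 <= pminor A I &
        Bs = [set I : {set 'I_n} | (#|I| == k) && (pminor A I != 0)]].

Definition is_positroid_polytope (R : realFieldType) (n : nat) (F : 'rV[R]_n -> Prop) : Prop :=
  exists k (Bs : {set {set 'I_n}}), is_positroid R k Bs /\
    forall x, matroid_polytope (R := R) Bs x <-> F x.

(* Main.v *)
Require Import Defs.
From HB Require Import structures.
From mathcomp Require Import all_boot all_order all_algebra.
From mathcomp Require Import all_fingroup zify ring lra.
Set Implicit Arguments. Unset Strict Implicit. Unset Printing Implicit Defensive.
Import Order.TTheory GRing.Theory Num.Theory.

Module Part0.
Local Open Scope ring_scope.

Section Det.
Variables (R : realFieldType) (n K : nat) (A : 'M[R]_(K, n)).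

Definition Dm (s : seq 'I_n) : 'M[R]_K :=
  \matrix_(i < K, j < K) oapp (A i) 0 (nth None (map Some s) j).
Definition D s := \det (Dm s).

Lemma det_xcol (M : 'M[R]_K) (j1 j2 : 'I_K) : j1 != j2 -> \det (xcol j1 j2 M) = - \det M.
Proof.
move=> ne; rewrite xcolE det_mulmx /tperm_mx det_perm odd_tperm ne.
by rewrite expr1 mulrN1.
Qed.

Lemma D_swap p x y q : ((size p).+1 < K)%N ->
  D (p ++ x :: y :: q) = - D (p ++ y :: x :: q).
Proof.
move=> Hp.
have H1 : (size p < K)%N by apply: ltnW.
pose j1 : 'I_K := Ordinal H1. pose j2 : 'I_K := Ordinal Hp.
have ne : j1 != j2 by apply/eqP => /(congr1 val) /=; lia.
rewrite /D -(det_xcol _ ne); congr (\det _); apply/matrixP => i j.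
rewrite xcolEsub !mxE; congr oapp; rewrite !map_cat !nth_cat !size_map.
case: tpermP => [->|->|n1 n2] /=.
- by rewrite ltnn ltnNge leqnSn /= subnn subSnn.
- by rewrite ltnn ltnNge leqnSn /= subnn subSnn.
have n1' : nat_of_ord j <> size p by move=> e; apply: n1; apply: val_inj.
have n2' : nat_of_ord j <> (size p).+1 by move=> e; apply: n2; apply: val_inj.
case: ltnP => // h.
have [k ->] : exists k, (j - size p = k.+2)%N by exists (j - size p - 2)%N; lia.
by [].
Qed.

Definition ordlt (x y : 'I_n) : bool := (x < y)%N.

Fixpoint ins (x : 'I_n) (s : seq 'I_n) : seq 'I_n :=
  match s with
  | [::] => [:: x]
  | y :: s' => if (x < y)%N then x :: s else y :: ins x s'
  end.

Lemma mem_ins (x : 'I_n) s z : (z \in ins x s) = (z == x) || (z \in s).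
Proof.
elim: s => [|y s IH] //=; case: ifP => _; rewrite !in_cons ?IH //.
by rewrite orbCA.
Qed.

Lemma size_ins (x : 'I_n) s : size (ins x s) = (size s).+1.
Proof. by elim: s => [|y s IH] //=; case: ifP => _ //=; rewrite IH. Qed.

Lemma count_ins (P : pred 'I_n) (x : 'I_n) s : count P (ins x s) = (P x + count P s)%N.
Proof.
elim: s => [|y s IH] //=; case: ifP => _ //=; rewrite IH; lia.
Qed.

Lemma path_ins (x a : 'I_n) (s : seq 'I_n) : path ordlt a s -> (a < x)%N -> x \notin s ->
  path ordlt a (ins x s).
Proof.
elim: s a => [|y s IH] a /=; first by move=> _ ax; rewrite /ordlt ax.
move=> /andP [ay ps] ax; rewrite in_cons negb_or => /andP [xy xs].
case: ifP => h /=; first by rewrite /ordlt ax h ps.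
apply/andP; split => //; apply: IH => //.
have : nat_of_ord x != nat_of_ord y by [].
move: h; rewrite /ordlt; lia.
Qed.

Lemma sorted_ins (x : 'I_n) s : sorted ordlt s -> x \notin s -> sorted ordlt (ins x s).
Proof.
case: s => [|y s] //= ps; rewrite in_cons negb_or => /andP [xy xs].
case: ifP => h /=; first by rewrite /ordlt h ps.
apply: path_ins => //.
have : nat_of_ord x != nat_of_ord y by [].
move: h; lia.
Qed.

Lemma sorted_enum_set (I : {set 'I_n}) : sorted ordlt (enum I).
Proof.
have : sorted ltn (map val (enum I)).
  rewrite -[enum _](eq_filter (mem_enum _)).
  rewrite -(eq_filter (mem_map val_inj _)) -filter_map.
  by rewrite (sorted_filter ltn_trans) // unlock val_ord_enum iota_ltn_sorted.
by rewrite sorted_map.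
Qed.

Lemma enum_setU1 (x : 'I_n) (I : {set 'I_n}) : x \notin I -> enum (x |: I) = ins x (enum I).
Proof.
move=> xI; apply: (irr_sorted_eq (leT := ordlt)).
- by move=> a b c; rewrite /ordlt; apply: ltn_trans.
- by move=> a; rewrite /ordlt ltnn.
- exact: sorted_enum_set.
- by apply: sorted_ins; rewrite ?mem_enum // sorted_enum_set.
by move=> z; rewrite mem_ins !mem_enum !inE.
Qed.

Lemma D_ins p (x : 'I_n) s : sorted ordlt s -> x \notin s ->
  (size p + (size s).+1 = K)%N ->
  D (p ++ ins x s) = (-1) ^+ count (fun y : 'I_n => (y < x)%N) s * D (p ++ x :: s).
Proof.
elim: s p => [|y s IH] p /=; first by rewrite expr0 mul1r.
move=> ps; rewrite in_cons negb_or => /andP [xy xs] Hsz.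
have ally : all (ordlt y) s.
  by apply: order_path_min => // a b c; rewrite /ordlt; apply: ltn_trans.
case: ifP => h.
  suff -> : count (fun y0 : 'I_n => (y0 < x)%N) s = 0%N.
    by rewrite ltnNge (ltnW h) /= expr0 mul1r.
  apply/eqP; rewrite eqn0Ngt -has_count; apply/hasPn => z zs.
  move/allP: ally => /(_ z zs); rewrite /ordlt; move: h; lia.
have yx : (y < x)%N.
  have : nat_of_ord x != nat_of_ord y by [].
  move: h; lia.
rewrite -cat_rcons IH ?(path_sorted ps) //; last by rewrite size_rcons; lia.
rewrite cat_rcons D_swap; last by move: Hsz; lia.
by rewrite yx add1n exprS mulN1r mulrN mulNr.
Qed.

End Det.

Section G.
Variables (R : realFieldType) (n m : nat) (A : 'M[R]_(m.+2, n)) (r : seq 'I_n).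

Definition Gm (u v : 'I_(m.+2) -> R) : 'M[R]_(m.+2) :=
  \matrix_(t, j) match nat_of_ord j with
                 | 0 => u t | 1 => v t
                 | j'.+2 => oapp (A t) 0 (nth None (map Some r) j') end.
Definition G u v := \det (Gm u v).

Definition jj0 : 'I_(m.+2) := ord0.
Definition jj1 : 'I_(m.+2) := lift ord0 ord0.

Lemma D_G i j : D A (i :: j :: r) = G (fun t => A t i) (fun t => A t j).
Proof.
rewrite /D /G; congr (\det _); apply/matrixP => a b; rewrite !mxE.
by case: b => [[|[|k]] hk].
Qed.

Lemma G_ext u v u' v' : u =1 u' -> v =1 v' -> G u v = G u' v'.
Proof.
move=> eu ev; rewrite /G; congr (\det _); apply/matrixP => a b; rewrite !mxE.
by case: b => [[|[|k]] hk] /=; rewrite ?eu ?ev.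
Qed.

Lemma det_col_eq (M : 'M[R]_(m.+2)) j1 j2 : j1 != j2 -> (forall t, M t j1 = M t j2) ->
  \det M = 0.
Proof.
move=> ne e; rewrite -det_tr; apply: (determinant_alternate ne) => t.
by rewrite !mxE.
Qed.

Lemma G_swap u v : G v u = - G u v.
Proof.
have ne : jj0 != jj1 by [].
rewrite /G -(det_xcol _ ne); congr (\det _); apply/matrixP => a b.
rewrite xcolEsub !mxE; case: tpermP => [->|->|n1 n2] //=.
case: b n1 n2 => [[|[|k]] hk] n1 n2 //=.
- by case: n1; apply: val_inj.
- by case: n2; apply: val_inj.
Qed.

Lemma G_same u : G u u = 0.
Proof. by apply: (@det_col_eq _ jj0 jj1) => // t; rewrite !mxE. Qed.

Lemma G_col u k : (k < m)%N ->
  G u (fun t => oapp (A t) 0 (nth None (map Some r) k)) = 0.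
Proof.
move=> hk; have hk2 : (k.+2 < m.+2)%N by [].
apply: (@det_col_eq _ jj1 (Ordinal hk2)) => [|t]; last by rewrite !mxE.
by apply/eqP => /(congr1 val).
Qed.

Lemma G_lin u v : G u v = \sum_t v t * cofactor (Gm u (fun _ => 0)) t jj1.
Proof.
rewrite /G (expand_det_col _ jj1); apply: eq_bigr => t _; rewrite mxE /=.
congr (_ * _); rewrite /cofactor; congr (_ * \det _); apply/matrixP => a b.
rewrite !mxE; have := neq_lift jj1 b.
by case: (lift jj1 b) => [[|[|k]] hk] //= ne.
Qed.

Lemma G_plucker u1 u2 u3 u4 : G u1 u2 != 0 ->
  G u1 u3 * G u2 u4 = G u1 u2 * G u3 u4 + G u1 u4 * G u2 u3.
Proof.
move=> nz.
pose c u t := cofactor (Gm u (fun _ => 0)) t jj1.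
pose h v := G u1 u3 * G u2 v - G u1 u2 * G u3 v - G u2 u3 * G u1 v.
pose gam : 'rV[R]_(m.+2) :=
  \row_t (G u1 u3 * c u2 t - G u1 u2 * c u3 t - G u2 u3 * c u1 t).
have hE v : h v = \sum_t v t * gam 0 t.
  rewrite /h !(G_lin _ v) !mulr_sumr -!sumrB; apply: eq_bigr => t _.
  rewrite mxE /c; ring.
have hN j : h (fun t => Gm u1 u2 t j) = 0.
  case: j => [[|[|k]] hk].
  - have E w : G w (fun t => Gm u1 u2 t (Ordinal hk)) = G w u1.
      by apply: G_ext => // t; rewrite mxE.
    by rewrite /h !E G_same (G_swap u1 u2) (G_swap u1 u3); ring.
  - have E w : G w (fun t => Gm u1 u2 t (Ordinal hk)) = G w u2.
      by apply: G_ext => // t; rewrite mxE.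
    by rewrite /h !E G_same (G_swap u2 u3); ring.
  - have hk' : (k < m)%N by [].
    have E w : G w (fun t => Gm u1 u2 t (Ordinal hk)) = 0.
      rewrite -(G_col w hk'); by apply: G_ext => // t; rewrite mxE.
    by rewrite /h !E; ring.
have gN : gam *m Gm u1 u2 = 0.
  apply/matrixP => i j; rewrite !mxE (ord1 i) -[RHS](hN j) hE.
  by apply: eq_bigr => t _; rewrite mulrC.
have Nu : Gm u1 u2 \in unitmx by rewrite unitmxE unitfE.
have g0 : gam = 0 by rewrite -[gam](mulmxK Nu) gN mul0mx.
have h0 : h u4 = 0 by rewrite hE g0 big1 // => t _; rewrite mxE mulr0.
apply/eqP; rewrite -subr_eq0 -h0 /h; apply/eqP; ring.
Qed.

End G.

Section Pos.
Variables (R : realFieldType) (n : nat) (Rs : {set 'I_n}) (A : 'M[R]_(#|Rs|.+2, n)).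

Definition pp (i j : 'I_n) := pminor A (i |: (j |: Rs)).
Definition sg (i : 'I_n) : R := (-1) ^+ count (fun y : 'I_n => (y < i)%N) (enum Rs).
Definition colA (i : 'I_n) := fun t => A t i.

Lemma pp_lt (i j : 'I_n) : i \notin Rs -> j \notin Rs -> (i < j)%N ->
  pp i j = sg i * sg j * G A (enum Rs) (colA i) (colA j).
Proof.
move=> iR jR ij.
have ne : i != j by apply/eqP => e; move: ij; rewrite e ltnn.
have ijR : i \notin j |: Rs by rewrite !inE negb_or ne.
rewrite /pp /pminor -/(D A _) (enum_setU1 ijR) (enum_setU1 jR).
have sr : size (enum Rs) = #|Rs| by rewrite cardE.
rewrite -[ins i _]cat0s D_ins //; first last.
- by rewrite size_ins sr.
- by rewrite mem_ins negb_or ne mem_enum.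
- by apply: sorted_ins; rewrite ?mem_enum ?sorted_enum_set.
rewrite -[i :: _]cat1s D_ins ?sorted_enum_set ?mem_enum //; last by rewrite sr.
rewrite D_G count_ins /= ltnNge (ltnW ij) /= add0n /sg /colA; ring.
Qed.

Lemma pp_plucker (w x y z : 'I_n) :
  w \notin Rs -> x \notin Rs -> y \notin Rs -> z \notin Rs ->
  (w < x)%N -> (x < y)%N -> (y < z)%N -> pp w x != 0 ->
  pp w y * pp x z = pp w x * pp y z + pp w z * pp x y.
Proof.
move=> wR xR yR zR wx xy yz nz.
have wy : (w < y)%N by apply: ltn_trans xy.
have xz : (x < z)%N by apply: ltn_trans yz.
have wz : (w < z)%N by apply: ltn_trans xz.
rewrite !pp_lt // in nz *.
have nzG : G A (enum Rs) (colA w) (colA x) != 0.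
  by apply: contraNneq nz => ->; rewrite mulr0.
have P := G_plucker (colA y) (colA z) nzG.
transitivity (sg w * sg x * sg y * sg z *
  (G A (enum Rs) (colA w) (colA y) * G A (enum Rs) (colA x) (colA z))); first ring.
rewrite P; ring.
Qed.

Lemma pp_sym i j : pp i j = pp j i.
Proof. by rewrite /pp setUCA. Qed.

End Pos.

End Part0.
Import Part0.

Module Part1.
Local Open Scope ring_scope.

Section Poly.
Variables (R : realFieldType) (n : nat).
Implicit Types (Bs : {set {set 'I_n}}) (B P Q : {set 'I_n}).

Definition wv P Q : 'rV[R]_n := \row_i ((i \in P)%:R - (i \notin P :|: Q)%:R).

Lemma dot_evec (w : 'rV[R]_n) B : dotv w (evec R B) = \sum_(i in B) w 0 i.
Proof.
rewrite /dotv [RHS]big_mkcond; apply: eq_bigr => i _; rewrite mxE.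
by case: (i \in B); rewrite ?mulr1 ?mulr0.
Qed.

Lemma sum_ind B (C : {set 'I_n}) : \sum_(i in B) ((i \in C)%:R : R) = #|B :&: C|%:R.
Proof.
rewrite -sum1_card natr_sum big_mkcond [RHS]big_mkcond; apply: eq_bigr => i _.
by rewrite inE; case: (i \in B); case: (i \in C).
Qed.

Lemma dot_wv P Q B :
  dotv (wv P Q) (evec R B) = #|B :&: P|%:R - #|B :\: (P :|: Q)|%:R.
Proof.
rewrite dot_evec.
under eq_bigr do rewrite mxE.
rewrite sumrB sum_ind setDE.
rewrite -(sum_ind B (~: (P :|: Q))).
by congr (_ - _); apply: eq_bigr => i _; rewrite in_setC.
Qed.

Lemma dot_wv_le P Q B : dotv (wv P Q) (evec R B) <= #|P|%:R.
Proof.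
rewrite dot_wv lerBlDr -natrD ler_nat.
have := subset_leq_card (subsetIr B P); lia.
Qed.

Lemma dot_wv_eq P Q B :
  (dotv (wv P Q) (evec R B) == #|P|%:R) = (P \subset B) && (B \subset P :|: Q).
Proof.
rewrite dot_wv subr_eq -natrD eqr_nat.
have le := subset_leq_card (subsetIr B P).
have -> : (#|B :&: P| == (#|P| + #|B :\: (P :|: Q)|)%N) =
          (#|B :&: P| == #|P|) && (#|B :\: (P :|: Q)| == 0%N) by lia.
congr andb.
  apply/idP/idP => [/eqP h|h].
    have : B :&: P == P by rewrite eqEcard subsetIr h leqnn.
    by move/eqP/setIidPr.
  by move/setIidPr: h => ->.
by rewrite cards_eq0 setD_eq0.
Qed.

Lemma dot_sum (w : 'rV[R]_n) Bs (c : {set 'I_n} -> R) (F : {set 'I_n} -> 'rV[R]_n) :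
  dotv w (\sum_(B in Bs) c B *: F B) = \sum_(B in Bs) c B * dotv w (F B).
Proof.
rewrite /dotv.
under eq_bigr do rewrite summxE mulr_sumr.
rewrite exchange_big; apply: eq_bigr => B _; rewrite mulr_sumr.
by apply: eq_bigr => i _; rewrite mxE mulrCA.
Qed.

Lemma conv_support Bs (l : {ffun {set 'I_n} -> R}) (w : 'rV[R]_n) (mm : R) :
  (forall B, 0 <= l B) -> \sum_(B in Bs) l B = 1 ->
  (forall B, B \in Bs -> dotv w (evec R B) <= mm) ->
  dotv w (\sum_(B in Bs) l B *: evec R B) = mm ->
  forall B, B \in Bs -> dotv w (evec R B) < mm -> l B = 0.
Proof.
move=> l0 l1 le eq.
have H : \sum_(B in Bs) l B * (mm - dotv w (evec R B)) = 0.
  under eq_bigr do rewrite mulrBr.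
  by rewrite sumrB -dot_sum eq -mulr_suml l1 mul1r subrr.
have pos : forall B', B' \in Bs -> 0 <= l B' * (mm - dotv w (evec R B')).
  by move=> B' BB'; rewrite mulr_ge0 // subr_ge0 le.
have H' := psumr_eq0P pos H.
move=> B BB lt.
have : l B * (mm - dotv w (evec R B)) = 0 by apply: H'.
move/eqP; rewrite mulf_eq0 => /orP [/eqP //|].
by rewrite subr_eq0 => /eqP e; move: lt; rewrite e ltxx.
Qed.

Lemma conv_vertex Bs B0 : B0 \in Bs -> in_conv Bs (evec R B0).
Proof.
move=> B0B; exists [ffun B => (B == B0)%:R]; split.
- by move=> B; rewrite ffunE ler0n.
- rewrite (bigD1 B0) //= big1 => [|B /andP [_ ne]]; first by rewrite ffunE eqxx addr0.
  by rewrite ffunE (negPf ne).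
- rewrite (bigD1 B0) //= big1 => [|B /andP [_ ne]]; first by rewrite ffunE eqxx scale1r addr0.
  by rewrite ffunE (negPf ne) scale0r.
Qed.

Lemma sum_restr (V : zmodType) Bs (Fs : {set {set 'I_n}}) (F : {set 'I_n} -> V) :
  Fs \subset Bs -> \sum_(B in Fs) F B = \sum_(B in Bs) (if B \in Fs then F B else 0).
Proof.
move=> sub; rewrite [RHS]big_mkcond [LHS]big_mkcond; apply: eq_bigr => B _.
case BF: (B \in Fs); last by case: (B \in Bs).
by rewrite (subsetP sub B BF).
Qed.

Lemma conv_le Bs (w : 'rV[R]_n) mm y : in_conv Bs y ->
  (forall B, B \in Bs -> dotv w (evec R B) <= mm) -> dotv w y <= mm.
Proof.
case=> l [l0 l1 ->] le; rewrite dot_sum.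
apply: (@le_trans _ _ (\sum_(B in Bs) l B * mm)); last by rewrite -mulr_suml l1 mul1r.
by apply: ler_sum => B HB; apply: ler_wpM2l; rewrite ?l0 ?le.
Qed.

Lemma conv_vertex_inv Bs I : in_conv Bs (evec R I) -> I \in Bs.
Proof.
case=> l [l0 l1 e]; apply/negPn/negP => nI.
have z : forall B, B \in Bs -> l B = 0.
  move=> B BB; apply: (@conv_support Bs l (wv I set0) #|I|%:R l0 l1) => //.
  - by move=> B' _; apply: dot_wv_le.
  - by rewrite -e; apply/eqP; rewrite dot_wv_eq subxx setU0 subxx.
  rewrite lt_neqAle dot_wv_le andbT dot_wv_eq setU0.
  apply/negP => /andP [h1 h2].
  have eBI : B = I by apply/eqP; rewrite eqEsubset h2 h1.
  by move: nI; rewrite -eBI BB.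
by move: l1; rewrite big1 // => /eqP; rewrite eq_sym oner_eq0.
Qed.

Lemma face_lemma Bs P Q :
  [set B in Bs | (P \subset B) && (B \subset P :|: Q)] != set0 ->
  is_face (matroid_polytope (R := R) Bs)
          (in_conv (R := R) [set B in Bs | (P \subset B) && (B \subset P :|: Q)]).
Proof.
set Fs := [set B in Bs | _] => /set0Pn [B0 B0F].
have sub : Fs \subset Bs by apply/subsetP => B; rewrite inE => /andP [].
have dle : forall B, B \in Bs -> dotv (wv P Q) (evec R B) <= #|P|%:R.
  by move=> B _; apply: dot_wv_le.
have dF : forall B, B \in Fs -> dotv (wv P Q) (evec R B) = #|P|%:R.
  by move=> B; rewrite inE => /andP [_ h]; apply/eqP; rewrite dot_wv_eq.
exists (wv P Q) => x; split.
- case=> l [l0 l1 ex].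
  have xP : matroid_polytope Bs x.
    exists [ffun B => if B \in Fs then l B else 0]; split.
    + by move=> B; rewrite ffunE; case: ifP.
    + by rewrite -l1 (sum_restr _ sub); apply: eq_bigr => B _; rewrite ffunE.
    + rewrite ex (sum_restr _ sub); apply: eq_bigr => B _; rewrite ffunE.
      by case: ifP; rewrite ?scale0r.
  split => // y yP; rewrite (_ : dotv (wv P Q) x = #|P|%:R); first exact: conv_le yP dle.
  rewrite ex dot_sum (eq_bigr (fun B => l B * #|P|%:R)); last by move=> B BF; rewrite dF.
  by rewrite -mulr_suml l1 mul1r.
- case=> [[l [l0 l1 ex]] hmax].
  have dx : dotv (wv P Q) x = #|P|%:R.
    apply/le_anti/andP; split; first by apply: conv_le dle; exists l.
    rewrite -(dF B0 B0F); apply: hmax; apply: conv_vertex.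
    by rewrite (subsetP sub).
  have z : forall B, B \in Bs -> B \notin Fs -> l B = 0.
    move=> B BB nF; apply: (@conv_support Bs l (wv P Q) #|P|%:R l0 l1) => //.
      by rewrite -ex.
    rewrite lt_neqAle dot_wv_le andbT dot_wv_eq.
    by move: nF; rewrite inE BB.
  exists l; split => //.
  + rewrite -l1 (sum_restr _ sub); apply: eq_bigr => B BB.
    by case: ifP => // /negbT nF; rewrite z.
  + rewrite ex (sum_restr _ sub); apply: eq_bigr => B BB.
    by case: ifP => // /negbT nF; rewrite z ?scale0r.
Qed.

End Poly.

End Part1.
Import Part1.

Module Part2.

Section Mat.
Variables (n : nat) (S : {set 'I_n}) (Bs : {set {set 'I_n}}).
Hypothesis hM : is_matroid S Bs.

Definition exch : rel 'I_n := fun x y =>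
  [exists B in Bs, [&& x \in B, y \notin B & y |: (B :\ x) \in Bs]].

Lemma exchP x y : reflect (exists2 B, B \in Bs & [/\ x \in B, y \notin B & y |: (B :\ x) \in Bs])
  (exch x y).
Proof.
apply: (iffP existsP) => [[B /and4P [BB xB yB yBs]]|[B BB [xB yB yBs]]].
  by exists B.
by exists B; rewrite BB xB yB yBs.
Qed.

Lemma exch_sym x y : exch x y -> exch y x.
Proof.
move/exchP => [B BB [xB yB yBs]]; apply/exchP; exists (y |: (B :\ x)) => //.
have nxy : x != y by apply: contraNneq yB => <-.
split.
- by rewrite !inE eqxx.
- by rewrite !inE eqxx /= (negPf nxy).
have -> : x |: ((y |: (B :\ x)) :\ y) = B.
  apply/setP => z; rewrite !inE.
  case: (eqVneq z x) => [->|zx] /=; first by rewrite xB.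
  by case: (eqVneq z y) => [->|zy] //=; rewrite (negPf yB).
done.
Qed.

Lemma exch_S x y : exch x y -> (x \in S) && (y \in S).
Proof.
case: hM => _ [sub _] /exchP [B BB [xB yB yBs]].
by rewrite (subsetP (sub _ BB) _ xB) (subsetP (sub _ yBs)) // !inE eqxx.
Qed.

Section Mix.
Variable E : {set 'I_n}.
Hypothesis Ecl : forall u v, exch u v -> (u \in E) = (v \in E).
Let E2 := S :\: E.

Lemma mix_aux B B' : B \in Bs -> B' \in Bs -> B :&: E2 \subset B' ->
  (B :&: E) :|: (B' :&: E2) = B.
Proof.
case: hM => _ [sub ex] BB BB' s1.
have s2 : B' :&: E2 \subset B.
  apply/subsetP => x xB'; apply/negPn/negP => xnB.
  have xB'0 : x \in B' by move: xB'; rewrite inE => /andP [].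
  have xd : x \in B' :\: B by rewrite inE xnB.
  have [y yd yBs] := ex _ _ BB' BB x xd.
  move: yd; rewrite inE => /andP [ynB' yB].
  have exy : exch x y by apply/exchP; exists B'.
  move: xB'; rewrite !inE => /and3P [xE xS _].
  have yE : y \notin E by rewrite -(Ecl exy).
  have : y \in B :&: E2 by rewrite !inE yB yE (subsetP (sub _ BB)).
  by move/(subsetP s1); rewrite (negPf ynB').
apply/setP => z; rewrite !inE.
have := subsetP s1 z; have := subsetP s2 z; rewrite !inE.
have := subsetP (sub _ BB) z.
case: (z \in B); case: (z \in E); case: (z \in B'); case: (z \in S) => //=;
  by move=> h1 h2 h3; (try by move: (h1 isT)); (try by move: (h2 isT)); (try by move: (h3 isT)).
Qed.

Lemma mix B B' : B \in Bs -> B' \in Bs -> (B :&: E) :|: (B' :&: E2) \in Bs.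
Proof.
move=> BB BB'.
suff H : forall m B, (#|(B :&: E2) :\: B'| <= m)%N -> B \in Bs ->
  (B :&: E) :|: (B' :&: E2) \in Bs by exact: (H _ B (leqnn _) BB).
case: hM => _ [sub ex].
elim => [|m IH] {}B hm {}BB.
  have s1 : B :&: E2 \subset B'.
    by rewrite -setD_eq0 -cards_eq0; move: hm; lia.
  by rewrite mix_aux.
case: (set_0Vmem ((B :&: E2) :\: B')) => [e0|[x xd]].
  by rewrite mix_aux // -setD_eq0 e0.
move/setDP: xd => [/setIP [xB xE2] xnB'].
move/setDP: (xE2) => [xS xE].
have xd' : x \in B :\: B' by apply/setDP.
have [y yd yBs] := ex _ _ BB BB' x xd'.
move: yd; rewrite inE => /andP [ynB yB'].
have exy : exch x y by apply/exchP; exists B.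
have yE : y \notin E by rewrite -(Ecl exy).
have eqE : (y |: (B :\ x)) :&: E = B :&: E.
  apply/setP => z; rewrite !inE; case: (eqVneq z y) => [->|].
    by move: yE; case: (y \in E); rewrite ?andbF.
  by case: (eqVneq z x) => [->|] //=; move: xE; case: (x \in E); rewrite ?andbF.
rewrite -eqE; apply: IH => //.
have sub1 : ((y |: (B :\ x)) :&: E2) :\: B' \subset ((B :&: E2) :\: B') :\ x.
  apply/subsetP => z; rewrite !inE; case: (eqVneq z y) => [->|]; first by rewrite yB'.
  by move=> _ /= /and4P [-> /andP [-> ->] -> ->].
have := subset_leq_card sub1.
have : x \in (B :&: E2) :\: B' by apply/setDP; split => //; apply/setIP.
move=> xin le; move: hm; rewrite (cardsD1 x) xin add1n ltnS => hm.
exact: leq_trans le hm.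
Qed.

End Mix.

Definition restr (E : {set 'I_n}) := [set B :&: E | B in Bs].

Lemma restr_matroid E F :
  (forall B B', B \in Bs -> B' \in Bs -> (B :&: E) :|: (B' :&: F) \in Bs) ->
  (forall u v, exch u v -> u \in E -> v \in E) -> [disjoint E & F] ->
  is_matroid E (restr E).
Proof.
move=> Hmix Hcl Hdis; case: hM => [ne [sub ex]]; split; [|split].
- case/set0Pn: ne => B0 B0B; apply/set0Pn; exists (B0 :&: E); exact: imset_f.
- by move=> X /imsetP [B _ ->]; apply: subsetIr.
move=> X1 X2 /imsetP [B1 B1B ->] /imsetP [B2 B2B ->] x.
move/setDP => [/setIP [xB1 xE] xn].
have xB2 : x \notin B2 by apply: contra xn => xB2; apply/setIP.
have CB := Hmix B1 B2 B1B B2B.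
have xd : x \in ((B1 :&: E) :|: (B2 :&: F)) :\: B2.
  by apply/setDP; split => //; apply/setUP; left; apply/setIP.
have [y /setDP [yB2 yC] DB] := ex _ _ CB B2B x xd.
have xC : x \in (B1 :&: E) :|: (B2 :&: F) by case/setDP: xd.
have exy : exch x y by apply/exchP; exists ((B1 :&: E) :|: (B2 :&: F)).
have yE := Hcl _ _ exy xE.
exists y.
  apply/setDP; split; first by apply/setIP.
  by apply: contra yC => h; apply/setUP; left.
apply/imsetP; exists (y |: (B1 :&: E :|: B2 :&: F) :\ x) => //.
apply/setP => z; rewrite !inE.
case: (eqVneq z y) => [->|zy] /=; first by rewrite yE.
case zE : (z \in E); last by rewrite !andbF.
by rewrite (disjointFr Hdis zE) !andbF !orbF !andbT.
Qed.

Section Dec.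
Variable E : {set 'I_n}.
Hypothesis Ecl : forall u v, exch u v -> (u \in E) = (v \in E).
Hypothesis ES : E \subset S.

Lemma dec_matroid1 : is_matroid E (restr E).
Proof.
apply: (@restr_matroid E (S :\: E)).
- by move=> B B' BB BB'; apply: mix.
- by move=> u v e; rewrite (Ecl e).
by rewrite disjoints_subset; apply/subsetP => z zE; rewrite !inE zE.
Qed.

Lemma dec_matroid2 : is_matroid (S :\: E) (restr (S :\: E)).
Proof.
apply: (@restr_matroid (S :\: E) E).
- by move=> B B' BB BB'; rewrite setUC; apply: mix.
- move=> u v e; rewrite !inE (Ecl e) => /andP [-> _] /=.
  by case/andP: (exch_S e).
by rewrite disjoints_subset; apply/subsetP => z; rewrite !inE => /andP [].
Qed.

Lemma dec_sum : Bs = direct_sum (restr E) (restr (S :\: E)).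
Proof.
case: hM => _ [sub _].
apply/setP => B; apply/idP/imset2P => [BB|[X1 X2 /imsetP [B1 B1B ->] /imsetP [B2 B2B ->] ->]].
  exists (B :&: E) (B :&: (S :\: E)); try by apply: imset_f.
  apply/setP => z; rewrite !inE.
  have := subsetP (sub _ BB) z.
  by case: (z \in B); case: (z \in E); case: (z \in S) => // /(_ isT).
exact: mix.
Qed.

End Dec.

Lemma connected_connect a c :
  ~ (exists E1 E2 Bs1 Bs2,
       [/\ E1 != set0, E2 != set0, [disjoint E1 & E2], E1 :|: E2 = S &
       [/\ is_matroid E1 Bs1, is_matroid E2 Bs2 & Bs = direct_sum Bs1 Bs2]]) ->
  a \in S -> c \in S -> connect exch a c.
Proof.
move=> nd aS cS; apply/negPn/negP => nac.
pose E := [set x in S | connect exch a x].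
have Ecl : forall u v, exch u v -> (u \in E) = (v \in E).
  move=> u v e; rewrite !inE; case/andP: (exch_S e) => -> -> /=.
  apply/idP/idP => h; first exact: connect_trans h (connect1 e).
  exact: connect_trans h (connect1 (exch_sym e)).
have ES : E \subset S by apply/subsetP => z; rewrite inE => /andP [].
apply: nd; exists E, (S :\: E), (restr E), (restr (S :\: E)); split.
- by apply/set0Pn; exists a; rewrite inE aS connect0.
- by apply/set0Pn; exists c; rewrite !inE cS andbT nac.
- by rewrite disjoints_subset; apply/subsetP => z zE; rewrite in_setC in_setD zE.
- apply/setP => z; rewrite in_setU in_setD; have := subsetP ES z.
  by case: (z \in E); case: (z \in S) => // /(_ isT).
- split; [exact: dec_matroid1 | exact: dec_matroid2 | exact: dec_sum].
Qed.

End Mat.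

End Part2.
Import Part2.

Module Part3.

Lemma path_switch (T : finType) (e : rel T) (Q : pred T) a c :
  connect e a c -> Q a != Q c -> exists u v, e u v /\ Q u != Q v.
Proof.
move/connectP => [p pth ->]; elim: p a pth => [|y p IH] a /=; first by rewrite eqxx.
move=> /andP [ay pth] ne; case: (eqVneq (Q a) (Q y)) => [eq|neq].
  by apply: (IH y) => //; rewrite -eq.
by exists a, y.
Qed.

Definition btw n (u v z : 'I_n) : bool := (minn u v < z < maxn u v)%N.

Lemma cyc_sep n (a b c d : 'I_n) : cyclic_order a b c d -> btw b d a != btw b d c.
Proof.
rewrite /cyclic_order /btw => /or4P [] /and3P [h1 h2 h3].
all: apply/negP => /eqP; lia.
Qed.

Lemma cyc_distinct n (a b c d : 'I_n) : cyclic_order a b c d ->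
  [/\ a != b, a != c, a != d, b != c & [/\ b != d & c != d]].
Proof.
rewrite /cyclic_order => /or4P [] /and3P [h1 h2 h3].
all: rewrite -!val_eqE /=; repeat split; apply/eqP; lia.
Qed.

Lemma sep_sym n (u v x y : 'I_n) : u != v -> x != y -> u != x -> u != y -> v != x -> v != y ->
  btw u v x != btw u v y -> btw x y u != btw x y v.
Proof.
rewrite -!val_eqE /= /btw => /eqP ? /eqP ? /eqP ? /eqP ? /eqP ? /eqP ?.
move=> /eqP h; apply/negP => /eqP h'.
lia.
Qed.

Lemma cross_cyc n (u v x y : 'I_n) : u != v -> x != y -> u != x -> u != y -> v != x -> v != y ->
  btw u v x != btw u v y -> cyclic_order u x v y \/ cyclic_order u y v x.
Proof.
rewrite -!val_eqE /= /btw /cyclic_order => /eqP ? /eqP ? /eqP ? /eqP ? /eqP ? /eqP ?.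
move=> /eqP h.
case: (ltngtP u v) => uv; last lia.
all: case: (ltnP x u) => xu; case: (ltnP x v) => xv; case: (ltnP y u) => yu; case: (ltnP y v) => yv.
all: try (left; apply/or4P; lia); try (right; apply/or4P; lia); lia.
Qed.

End Part3.
Import Part3.

Module Part4.
Local Open Scope ring_scope.

Lemma not_positroid (R : realFieldType) n (a b c d : 'I_n) (Rs : {set 'I_n}) :
  cyclic_order a b c d -> [disjoint Rs & [set a; b; c; d]] ->
  ~ is_positroid_polytope
      (in_conv (R := R) [set a |: (b |: Rs); a |: (d |: Rs); b |: (c |: Rs); c |: (d |: Rs)]).
Proof.
move=> cyc dis.
have [ab ac ad bc [bd cd]] := cyc_distinct cyc.
have ba : b != a by rewrite eq_sym. have ca : c != a by rewrite eq_sym.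
have da : d != a by rewrite eq_sym. have cb : c != b by rewrite eq_sym.
have db : d != b by rewrite eq_sym. have dc : d != c by rewrite eq_sym.
have aR : a \notin Rs by rewrite (disjointFl dis) // !inE eqxx.
have bR : b \notin Rs by rewrite (disjointFl dis) // !inE eqxx !orbT.
have cR : c \notin Rs by rewrite (disjointFl dis) // !inE eqxx !orbT.
have dR : d \notin Rs by rewrite (disjointFl dis) // !inE eqxx !orbT.
set Fb := [set _; _; _; _].
move=> [k' [Bs' [[A [_ nonneg eqBs] equiv]]]].
have inFb Y : Y \in Fb -> Y \in Bs'.
  by move=> h; apply: (conv_vertex_inv (R := R)); apply/(equiv _).2; apply: conv_vertex.
have notFb Y : Y \notin Fb -> Y \notin Bs'.
  apply: contra => h; apply: (conv_vertex_inv (R := R)); apply/(equiv _).1.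
  exact: conv_vertex.
have card2 x y : x \notin Rs -> y \notin Rs -> x != y -> #|x |: (y |: Rs)| = #|Rs|.+2.
  move=> xR yR xy; rewrite !cardsU1 !inE negb_or xy xR yR /=; by [].
have abF : a |: (b |: Rs) \in Fb by rewrite !inE eqxx.
have : k' = #|Rs|.+2.
  move: (inFb _ abF); rewrite eqBs inE => /andP [/eqP e _].
  by rewrite -e card2.
move=> ek; subst k'.
have pos x y : x |: (y |: Rs) \in Fb -> 0 < pp A x y.
  move=> h; move: (inFb _ h); rewrite eqBs inE => /andP [/eqP cx nz].
  by rewrite lt_neqAle eq_sym nz nonneg.
have zero x y : x \notin Rs -> y \notin Rs -> x != y -> x |: (y |: Rs) \notin Fb ->
    pp A x y = 0.
  move=> xR yR xy h; move: (notFb _ h); rewrite eqBs inE card2 // eqxx /=.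
  by move/negPn/eqP.
have Pab : 0 < pp A a b by apply: pos; rewrite !inE eqxx.
have Pad : 0 < pp A a d by apply: pos; rewrite !inE eqxx !orbT.
have Pbc : 0 < pp A b c by apply: pos; rewrite !inE eqxx !orbT.
have Pcd : 0 < pp A c d by apply: pos; rewrite !inE eqxx !orbT.
have nq := (negPf ab, negPf ac, negPf ad, negPf bc, negPf bd, negPf cd,
             negPf ba, negPf ca, negPf da, negPf cb, negPf db, negPf dc).
have nR := (negPf aR, negPf bR, negPf cR, negPf dR).
have Zac : pp A a c = 0.
  apply: zero => //; rewrite !inE -!orbA; apply/negP => /or4P [] /eqP e.
  - by move: e => /setP /(_ c); rewrite !inE !nq !nR eqxx.
  - by move: e => /setP /(_ c); rewrite !inE !nq !nR eqxx.
  - by move: e => /setP /(_ a); rewrite !inE !nq !nR eqxx.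
  - by move: e => /setP /(_ a); rewrite !inE !nq !nR eqxx.
have Zbd : pp A b d = 0.
  apply: zero => //; rewrite !inE -!orbA; apply/negP => /or4P [] /eqP e.
  - by move: e => /setP /(_ d); rewrite !inE !nq !nR eqxx.
  - by move: e => /setP /(_ b); rewrite !inE !nq !nR eqxx.
  - by move: e => /setP /(_ d); rewrite !inE !nq !nR eqxx.
  - by move: e => /setP /(_ b); rewrite !inE !nq !nR eqxx.
have contra0 (p1 p2 p3 p4 : R) : 0 < p1 -> 0 < p2 -> 0 < p3 -> 0 < p4 ->
    0 = p1 * p2 + p3 * p4 -> False.
  move=> h1 h2 h3 h4 e.
  have := addr_gt0 (mulr_gt0 h1 h2) (mulr_gt0 h3 h4).
  by rewrite -e ltxx.
move: cyc; rewrite /cyclic_order => /or4P [] /and3P [h1 h2 h3].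
- have := pp_plucker aR bR cR dR h1 h2 h3 (lt0r_neq0 Pab).
  rewrite Zac mul0r; exact: contra0 Pab Pcd Pad Pbc.
- have := pp_plucker bR cR dR aR h1 h2 h3 (lt0r_neq0 Pbc).
  rewrite Zbd mul0r (pp_sym A d a) (pp_sym A b a); exact: contra0 Pbc Pad Pab Pcd.
- have := pp_plucker cR dR aR bR h1 h2 h3 (lt0r_neq0 Pcd).
  rewrite (pp_sym A c a) Zac mul0r (pp_sym A c b) (pp_sym A d a).
  exact: contra0 Pcd Pab Pbc Pad.
- have := @pp_plucker R n Rs A d a b c dR aR bR cR h1 h2 h3.
  rewrite (pp_sym A d a) => /(_ (lt0r_neq0 Pad)).
  rewrite (pp_sym A d b) Zbd mul0r (pp_sym A d c).
  exact: contra0 Pad Pbc Pcd Pab.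
Qed.

End Part4.
Import Part4.

Module Part5.

Lemma cards_disjU (T : finType) (A B : {set T}) : [disjoint A & B] -> #|A :|: B| = (#|A| + #|B|)%N.
Proof. by move=> d; rewrite cardsU (disjoint_setI0 d) cards0 subn0. Qed.

Lemma pick_one (T : finType) (X Rr : {set T}) (p q : T) :
  Rr \subset X -> X \subset p |: (q |: Rr) -> #|X| = #|Rr|.+1 -> X = p |: Rr \/ X = q |: Rr.
Proof.
move=> s1 s2 cX.
have : X :\: Rr != set0.
  rewrite setD_eq0; apply/negP => s3.
  by have := subset_leq_card s3; rewrite cX ltnn.
case/set0Pn => z /setDP [zX zR].
have sz : z |: Rr \subset X by rewrite subUset sub1set zX s1.
have ez : z |: Rr = X.
  by apply/eqP; rewrite eqEcard sz cX cardsU1 zR /= add1n ltnSn.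
have := subsetP s2 z zX; rewrite !inE (negPf zR) orbF => /orP [/eqP e|/eqP e].
  by left; rewrite -ez e.
by right; rewrite -ez e.
Qed.

Lemma ar1 (x y k : nat) : (true + x + (true + y) = k)%N -> (x + y = k - 2)%N.
Proof. move=> /= h; lia. Qed.

Section Square.
Variables (n k : nat) (S : {set 'I_n}) (Bs Bs1 Bs2 : {set {set 'I_n}}).
Hypotheses (Hk : forall B, B \in Bs -> #|B| = k) (HBs : Bs = direct_sum Bs1 Bs2)
  (sub1 : forall B, B \in Bs1 -> B \subset S) (sub2 : forall B, B \in Bs2 -> B \subset ~: S).
Variables (a b c d : 'I_n) (R1 R2 : {set 'I_n}).
Hypotheses (cyc : cyclic_order a b c d) (aS : a \in S) (cS : c \in S)
  (bT : b \in ~: S) (dT : d \in ~: S)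
  (aR1 : a \notin R1) (cR1 : c \notin R1) (aB : a |: R1 \in Bs1) (cB : c |: R1 \in Bs1)
  (bR2 : b \notin R2) (dR2 : d \notin R2) (bB : b |: R2 \in Bs2) (dB : d |: R2 \in Bs2).

Let Rs := R1 :|: R2.

Lemma disjST (X Y : {set 'I_n}) : X \subset S -> Y \subset ~: S -> [disjoint X & Y].
Proof.
move=> sX sY; rewrite disjoints_subset; apply/subsetP => z zX.
rewrite inE; apply/negP => zY; move: (subsetP sY z zY); rewrite inE (subsetP sX z zX).
by [].
Qed.

Lemma R1S : R1 \subset S.
Proof. by apply: subset_trans (sub1 aB); apply: subsetUr. Qed.
Lemma R2T : R2 \subset ~: S.
Proof. by apply: subset_trans (sub2 bB); apply: subsetUr. Qed.

Lemma U_eq x y : (x |: R1) :|: (y |: R2) = x |: (y |: Rs).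
Proof.
apply/setP => z; rewrite !inE.
by case: (z == x); case: (z == y); case: (z \in R1); case: (z \in R2).
Qed.

Lemma inBs x y : x |: R1 \in Bs1 -> y |: R2 \in Bs2 -> x |: (y |: Rs) \in Bs.
Proof. by move=> h1 h2; rewrite HBs -U_eq; apply: imset2_f. Qed.

Lemma card12 B1 B2 : B1 \in Bs1 -> B2 \in Bs2 -> (#|B1| + #|B2| = k)%N.
Proof.
move=> h1 h2; rewrite -cards_disjU; last by apply: disjST; [apply: sub1|apply: sub2].
by apply: Hk; rewrite HBs; apply: imset2_f.
Qed.

Lemma card_Rs : #|Rs| = (k - 2)%N.
Proof.
rewrite /Rs cards_disjU; last exact: disjST R1S R2T.
by apply: ar1; have := card12 aB bB; rewrite !cardsU1 aR1 bR2.
Qed.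

Lemma disj_Rs : [disjoint Rs & [set a; b; c; d]].
Proof.
rewrite disjoints_subset; apply/subsetP => z; rewrite !inE => /orP [zR|zR].
  have zS := subsetP R1S z zR.
  rewrite -!orbA; apply/negP => /or4P [] /eqP ez; subst z.
  - by move: aR1; rewrite zR.
  - by move: bT; rewrite inE zS.
  - by move: cR1; rewrite zR.
  - by move: dT; rewrite inE zS.
have := subsetP R2T z zR; rewrite inE => zS.
rewrite -!orbA; apply/negP => /or4P [] /eqP ez; subst z.
- by rewrite aS in zS.
- by move: bR2; rewrite zR.
- by rewrite cS in zS.
- by move: dR2; rewrite zR.
Qed.

Let Q := [set a; b; c; d].
Let Fb := [set a |: (b |: Rs); a |: (d |: Rs); b |: (c |: Rs); c |: (d |: Rs)].

Lemma Fs_eq : [set B in Bs | (Rs \subset B) && (B \subset Rs :|: Q)] = Fb.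
Proof.
apply/setP => B; rewrite inE; apply/andP/idP.
  case=> BB /andP [s1 s2]; move: BB; rewrite HBs => /imset2P [B1 B2 B1B B2B eB].
  have c1 : #|B1| = #|R1|.+1.
    have e1 : #|B1| = #|a |: R1| by apply/(@addIn #|b |: R2|); rewrite (card12 B1B bB) (card12 aB bB).
    by rewrite e1 cardsU1 aR1.
  have c2 : #|B2| = #|R2|.+1.
    have e1 : #|B2| = #|b |: R2| by apply/(@addnI #|a |: R1|); rewrite (card12 aB B2B) (card12 aB bB).
    by rewrite e1 cardsU1 bR2.
  have dB12 : [disjoint B1 & B2] by apply: disjST; [apply: sub1|apply: sub2].
  have h1 : R1 \subset B1.
    apply/subsetP => z zR; have : z \in B by apply: (subsetP s1); rewrite inE zR.
    rewrite eB inE => /orP [//|zB2].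
    by move: (subsetP (sub2 B2B) z zB2); rewrite inE (subsetP R1S z zR).
  have h2 : R2 \subset B2.
    apply/subsetP => z zR; have : z \in B by apply: (subsetP s1); rewrite inE zR orbT.
    rewrite eB inE => /orP [zB1|//].
    by move: (subsetP R2T z zR); rewrite inE (subsetP (sub1 B1B) z zB1).
  have h3 : B1 \subset a |: (c |: R1).
    apply/subsetP => z zB1; have zS := subsetP (sub1 B1B) z zB1.
    have : z \in Rs :|: Q by apply: (subsetP s2); rewrite eB inE zB1.
    rewrite !inE => /orP [/orP [->|zR2]|]; rewrite ?orbT //.
      by move: (subsetP R2T z zR2); rewrite inE zS.
    rewrite -!orbA; case/or4P => /eqP ez; subst z; rewrite ?eqxx ?orbT //.
    - by move: bT; rewrite inE zS.
    - by move: dT; rewrite inE zS.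
  have h4 : B2 \subset b |: (d |: R2).
    apply/subsetP => z zB2; have zS := subsetP (sub2 B2B) z zB2.
    rewrite inE in zS.
    have : z \in Rs :|: Q by apply: (subsetP s2); rewrite eB inE zB2 orbT.
    rewrite !inE => /orP [/orP [zR1|->]|]; rewrite ?orbT //.
      by move: (subsetP R1S z zR1) zS => ->.
    rewrite -!orbA; case/or4P => /eqP ez; subst z; rewrite ?eqxx ?orbT //.
    - by rewrite aS in zS.
    - by rewrite cS in zS.
  have [e1|e1] := pick_one h1 h3 c1; have [e2|e2] := pick_one h2 h4 c2;
    rewrite eB e1 e2 U_eq !inE ?eqxx ?orbT //.
  by rewrite setUCA eqxx !orbT.
rewrite !inE -!orbA => /or4P [] /eqP ->; (split; [|apply/andP; split]).
all: try (apply: inBs; done).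
all: try (rewrite setUCA; apply: inBs; done).
all: apply/subsetP => z; rewrite !inE => h; repeat (case/orP: h => h); by rewrite h ?orbT.
Qed.

Lemma square_all (R : realFieldType) :
  [/\ cyclic_order a b c d, a \in S, c \in S, b \in ~: S & d \in ~: S] /\
  [/\ #|Rs| = (k - 2)%N, [disjoint Rs & [set a; b; c; d]] &
    let Fb := [set a |: (b |: Rs); a |: (d |: Rs); b |: (c |: Rs); c |: (d |: Rs)] in
    is_face (matroid_polytope (R := R) Bs) (in_conv (R := R) Fb) /\
    ~ is_positroid_polytope (in_conv (R := R) Fb)].
Proof.
split; first by split.
split; [exact: card_Rs | exact: disj_Rs |] => /=.
split; last exact: not_positroid cyc disj_Rs.
have E := Fs_eq; rewrite /Fb /Q in E.
rewrite -E; apply: face_lemma; rewrite E.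
by apply/set0Pn; exists (a |: (b |: Rs)); rewrite !inE eqxx.
Qed.

End Square.

End Part5.
Import Part5.

Unset Implicit Arguments.
Import Order.TTheory GRing.Theory Num.Theory.
Local Open Scope ring_scope.

Theorem lemma3p5 (R : realFieldType) (n k : nat) (Bs : {set {set 'I_n}}) (S : {set 'I_n}) :
  is_matroid [set: 'I_n] Bs ->
  (forall B, B \in Bs -> #|B| = k) ->
  S != set0 -> ~: S != set0 ->
  (exists Bs1 Bs2, [/\ connected_matroid S Bs1, connected_matroid (~: S) Bs2 &
                       Bs = direct_sum Bs1 Bs2]) ->
  (exists a b c d : 'I_n,
     [/\ cyclic_order a b c d, a \in S, c \in S, b \in ~: S & d \in ~: S]) ->
  exists (a b c d : 'I_n) (Rs : {set 'I_n}),
    [/\ cyclic_order a b c d, a \in S, c \in S, b \in ~: S & d \in ~: S] /\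
    [/\ #|Rs| = (k - 2)%N, [disjoint Rs & [set a; b; c; d]] &
      let Fb := [set a |: (b |: Rs); a |: (d |: Rs); b |: (c |: Rs); c |: (d |: Rs)] in
      is_face (matroid_polytope (R := R) Bs) (in_conv (R := R) Fb) /\
      ~ is_positroid_polytope (in_conv (R := R) Fb)].
Proof.
move=> _ Hk _ _ [Bs1 [Bs2 [[hM1 nd1] [hM2 nd2] HBs]]] [a [b [c [d [cyc aS cS bT dT]]]]].
have sub1 : forall B, B \in Bs1 -> B \subset S by case: hM1 => _ [].
have sub2 : forall B, B \in Bs2 -> B \subset ~: S by case: hM2 => _ [].
have con1 := connected_connect hM1 nd1 aS cS.
have con2 := connected_connect hM2 nd2 bT dT.
have [ab ac ad bc [bd cd]] := cyc_distinct cyc.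
have [u [v [euv suv]]] := path_switch con1 (cyc_sep cyc).
have /andP [uS vS] := exch_S hM1 euv.
have /exchP [B1 B1B [uB1 vB1 vB1s]] := euv.
have uv : u != v by apply: contraNneq vB1 => <-.
have nS x y : x \in S -> y \in ~: S -> x != y.
  by move=> xS; rewrite inE; apply: contra => /eqP <-.
have sep : btw u v b != btw u v d.
  apply: sep_sym => //; rewrite eq_sym; apply: nS => //.
have [x [y [exy sxy]]] := path_switch con2 sep.
have /andP [xT yT] := exch_S hM2 exy.
have /exchP [B2 B2B [xB2 yB2 yB2s]] := exy.
have xy : x != y by apply: contraNneq yB2 => <-.
have hc : cyclic_order u x v y \/ cyclic_order u y v x.
  by apply: cross_cyc => //; apply: nS.
set R1 := B1 :\ u. set R2 := B2 :\ x.
have uR1 : u \notin R1 by rewrite !inE eqxx.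
have vR1 : v \notin R1 by rewrite !inE negb_and vB1 orbT.
have xR2 : x \notin R2 by rewrite !inE eqxx.
have yR2 : y \notin R2 by rewrite !inE negb_and yB2 orbT.
have uB : u |: R1 \in Bs1 by rewrite setD1K.
have xB : x |: R2 \in Bs2 by rewrite setD1K.
case: hc => hc.
- exists u, x, v, y, (R1 :|: R2).
  exact: (square_all Hk HBs sub1 sub2 hc uS vS xT yT uR1 vR1 uB vB1s xR2 yR2 xB yB2s R).
- exists u, y, v, x, (R1 :|: R2).
  exact: (square_all Hk HBs sub1 sub2 hc uS vS yT xT uR1 vR1 uB vB1s yR2 xR2 yB2s xB R).
Qed.
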